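(* For every integer $n\ge5$, the polynomial $a_n$ lies in $\mathbb{Z}[T_3,\dots,T_{n-1}]$, is homogeneous of degree $2$, and the quadratic form it defines on $\mathbb{R}^{n-3}$ (identifying the coordinates with $T_3,\dots,T_{n-1}$) is non-degenerate.
   Context: Let $T_1,T_2,\dots$ be indeterminates. Define linear operators $L,H$ on monomials (constants sent to $0$): $L(T_{\alpha_1}\cdots T_{\alpha_r})=\sum_{1\le i<j\le r}T_{\alpha_1}\cdots T_{\alpha_i+1}\cdots T_{\alpha_j+1}\cdots T_{\alpha_r}$, $H(T_{\alpha_1}\cdots T_{\alpha_r})=-\frac12\sum_{k=1}^{r}\sum_{l=1}^{\alpha_k-1}\binom{\alpha_k}{l}T_{1+l}T_{1+\alpha_k-l}\prod_{i\ne k}T_{\alpha_i}$. For $n\ge2$ let $A_n=-\sum_{k=1}^{n-1}\binom{n}{k}T_{1+k}T_{1+n-k}T_n$; set $R_2=0$, $R_{n+1}=A_n+L(R_n)+H(R_n)$. For $n\ge3$ write $R_{n+1}=\sum_{j\ge0}P_jT_n^j$ with the $P_j$ not involving $T_n$, and set $a_n:=P_1$. *)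

(* Defs.v *)
(* polynomials in countably many indeterminates T_0, T_1, ...
   (T_0 is never used) with rational coefficients, as the monoid algebra
   {malg rat[{cmonom nat}]} of multinomials' monalg. *)
From HB Require Import structures.
From mathcomp Require Import all_boot all_order all_algebra.
From mathcomp Require Import finmap.
From mathcomp.multinomials Require Import monalg.
From mathcomp Require Import reals.

Set Implicit Arguments.
Unset Strict Implicit.
Unset Printing Implicit Defensive.

Import Order.TTheory GRing.Theory Num.Theory.
Local Open Scope ring_scope.

Definition poly := {malg rat[{cmonom nat}]}.

Definition T (i : nat) : poly := << ucm i >>.

Definition mseq (m : {cmonom nat}) : seq nat :=
  flatten [seq nseq (m i) i | i <- finsupp m].

Definition prodT (s : seq nat) : poly := \prod_(x <- s) T x.

Definition Lmon (s : seq nat) : poly :=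
  \sum_(i < size s) \sum_(j < size s | (i < j)%N)
     prodT (set_nth 0%N (set_nth 0%N s i (nth 0%N s i).+1) j (nth 0%N s j).+1).

Definition Hmon (s : seq nat) : poly :=
  (- (1 / 2%:R) : rat) *:
  \sum_(k < size s) \sum_(1 <= l < nth 0%N s k)
     ('C(nth 0%N s k, l)%:R * T (1 + l) * T (1 + nth 0%N s k - l)
        * prodT (take k s ++ drop k.+1 s)).

Definition linext (f : seq nat -> poly) (P : poly) : poly :=
  \sum_(m <- msupp P) P@_m *: f (mseq m).

Definition Lop := linext Lmon.
Definition Hop := linext Hmon.

Definition Apoly (n : nat) : poly :=
  - \sum_(1 <= k < n) ('C(n, k)%:R * T (1 + k) * T (1 + n - k) * T n).

(* R_2 = 0, R_{n+1} = A_n + L(R_n) + H(R_n) for n >= 2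
   (R_0, R_1 are irrelevant and set to 0). *)
Fixpoint Rpoly (n : nat) : poly :=
  match n with
  | 0 | 1 | 2 => 0
  | n'.+1 => Apoly n' + Lop (Rpoly n') + Hop (Rpoly n')
  end.

(* P_j: the coefficient of T_n^j when P is written as sum_j P_j T_n^j with
   the P_j not involving T_n. *)
Definition coefT (n j : nat) (P : poly) : poly :=
  \sum_(m <- msupp P | m n == j) P@_m *: prodT [seq i <- mseq m | i != n].

Definition a_ (n : nat) : poly := coefT n 1 (Rpoly n.+1).

Definition evalP (R : realType) (v : nat -> R) (P : poly) : R :=
  \sum_(m <- msupp P) ratr (P@_m) * \prod_(i <- mseq m) v i.

(* Identification of R^k with the coordinates T_3, ..., T_{k+2}:
   T_i |-> x_{i-3} for 3 <= i <= k+2, other indeterminates |-> 0. *)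
Definition coordval (R : realType) (k : nat) (x : 'rV[R]_k) (i : nat) : R :=
  if (3 <= i)%N then (if @insub nat (fun j => (j < k)%N) 'I_k (i - 3)%N is Some j
                      then x 0 j else 0)
  else 0.

Definition qform (R : realType) (k : nat) (P : poly) (x : 'rV[R]_k) : R :=
  evalP (coordval x) P.

Definition polar (R : realType) (k : nat) (P : poly) (x y : 'rV[R]_k) : R :=
  (qform P (x + y) - qform P x - qform P y) / 2%:R.

Definition nondegenerate_qf (R : realType) (k : nat) (P : poly) : Prop :=
  forall x : 'rV[R]_k, (forall y : 'rV[R]_k, polar P x y = 0) -> x = 0.

(* Main.v *)
Require Import Defs.
From HB Require Import structures.
From mathcomp Require Import all_boot all_order all_algebra.
From mathcomp Require Import finmap.
From mathcomp.multinomials Require Import monalg.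
From mathcomp Require Import reals.
From mathcomp Require Import zify ring.
Import Order.TTheory GRing.Theory Num.Theory.
Local Open Scope ring_scope.
Set Warnings "-all".


Definition mon (s : seq nat) : {cmonom nat} := \big[mmul/mone]_(x <- s) ucm x.

Lemma monE s i : mon s i = count_mem i s.
Proof.
rewrite /mon; elim: s => [|x s IH]; first by rewrite big_nil cm1.
by rewrite big_cons cmM IH cmU /= eq_sym.
Qed.

Lemma mon_cat s t : mon (s ++ t) = mmul (mon s) (mon t).
Proof. by apply/eqP/cmP => i; rewrite cmM !monE count_cat. Qed.

Lemma mseq_count (m : {cmonom nat}) i : count_mem i (mseq m) = m i.
Proof.
rewrite /mseq count_flatten -map_comp sumnE big_map.
under eq_bigr => j _ do rewrite /= count_nseq /=.
case: (mdomP m i) => [iin|inot].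
  rewrite (bigD1_seq i) //= ?eqxx ?mul1n; last exact: fset_uniq.
  by rewrite big1 ?addn0 // => j /negbTE ->.
rewrite big1_seq // => j /= jin; case: eqP => [ej|] //.
by subst j; move: inot; rewrite jin.
Qed.

Lemma monK m : mon (mseq m) = m.
Proof. by apply/eqP/cmP => i; rewrite monE mseq_count. Qed.

Lemma mseq_mon s : perm_eq (mseq (mon s)) s.
Proof. by apply/allP => i _; rewrite /= mseq_count monE. Qed.

Lemma mon_perm s t : perm_eq s t -> mon s = mon t.
Proof. by move=> /permP h; apply/eqP/cmP => i; rewrite !monE h. Qed.

Lemma mem_mseq m i : (i \in mseq m) = (i \in finsupp m).
Proof. by rewrite -has_pred1 has_count mseq_count lt0n cmE_neq0. Qed.

Lemma mdeg_mon s : mdeg (mon s) = size s.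
Proof.
rewrite /mon mdeg_prod.
by elim: s => [|x s IH]; rewrite ?big_nil // big_cons mdegU IH.
Qed.

Lemma size_mseq m : size (mseq m) = mdeg m.
Proof. by rewrite -{2}(monK m) mdeg_mon. Qed.

Lemma TU x (m : {cmonom nat}) : T x * << m >> = << mmul (ucm x) m >> :> Defs.poly.
Proof. by rewrite /T malgM_def fgmulUU mulr1. Qed.

Lemma prodT_mon s : prodT s = << mon s >>.
Proof.
rewrite /prodT /mon; elim: s => [|x s IH]; first by rewrite !big_nil.
rewrite !big_cons IH; exact: TU.
Qed.

Definition allm (q : pred (seq nat)) (P : Defs.poly) :=
  forall m, m \in msupp P -> q (mseq m).

Lemma allm0 q : allm q 0.
Proof. by move=> m; rewrite msupp0 in_fset0. Qed.

Lemma allmD q P Q : allm q P -> allm q Q -> allm q (P + Q).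
Proof.
move=> hP hQ m /(fsubsetP (monalg.msuppD_le _ _)); rewrite in_fsetU => /orP [].
exact: hP. exact: hQ.
Qed.

Lemma allmN q P : allm q P -> allm q (- P).
Proof. by move=> h m; rewrite msuppN; exact: h. Qed.

Lemma allmB q P Q : allm q P -> allm q Q -> allm q (P - Q).
Proof. by move=> hP hQ; apply: allmD => //; apply: allmN. Qed.

Lemma allmZ q c P : allm q P -> allm q (c *: P).
Proof. by move=> h m /(fsubsetP (monalg.msuppZ_le _ _)); exact: h. Qed.

Lemma allmMn q n P : allm q P -> allm q (P *+ n).
Proof. by move=> h m /(fsubsetP (monalg.msuppMn_le _ _)); exact: h. Qed.

Lemma allm_sum q (I : Type) (r : seq I) (Pr : pred I) (F : I -> Defs.poly) :
  (forall i, Pr i -> allm q (F i)) -> allm q (\sum_(i <- r | Pr i) F i).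
Proof.
move=> h; apply: (big_ind (allm q)) => //; first exact: allm0.
exact: allmD.
Qed.

Lemma allm_prodT (q : pred (seq nat)) s : (forall t, perm_eq t s -> q t) -> allm q (prodT s).
Proof.
move=> h m; rewrite prodT_mon msuppU1 in_fset1 => /eqP ->.
apply: h; exact: mseq_mon.
Qed.

Lemma allm_linext (q1 q2 : pred (seq nat)) f P : allm q1 P ->
  (forall s, q1 s -> allm q2 (f s)) -> allm q2 (linext f P).
Proof.
move=> h1 h2; rewrite /linext big_seq; apply: allm_sum => m mP.
by apply: allmZ; apply: h2; apply: h1.
Qed.

Lemma allm_le (q1 q2 : pred (seq nat)) P : allm q1 P -> (forall s, q1 s -> q2 s) -> allm q2 P.
Proof. by move=> h1 h m /h1 /h. Qed.

Lemma linext_w f P (d : {fset {cmonom nat}}) : (msupp P `<=` d)%fset -> 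
  linext f P = \sum_(m <- d) P@_m *: f (mseq m).
Proof.
move=> le; rewrite /linext (big_fset_incl _ le) //.
by move=> m _ /mcoeff_outdom ->; rewrite scale0r.
Qed.

Lemma linextD f P Q : linext f (P + Q) = linext f P + linext f Q.
Proof.
have h1 : (msupp P `<=` msupp P `|` msupp Q)%fset by exact: fsubsetUl.
have h2 : (msupp Q `<=` msupp P `|` msupp Q)%fset by exact: fsubsetUr.
rewrite (@linext_w f _ _ (monalg.msuppD_le P Q)) (@linext_w f _ _ h1) (@linext_w f _ _ h2).
by rewrite -big_split /=; apply: eq_bigr => m _; rewrite mcoeffD scalerDl.
Qed.

Lemma mcoeff_prodT s m : (prodT s)@_m = (mon s == m)%:R.
Proof. by rewrite prodT_mon mcoeffU1. Qed.

Lemma mcoeff_linext f P m :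
  (linext f P)@_m = \sum_(k <- msupp P) P@_k * (f (mseq k))@_m.
Proof. by rewrite /linext raddf_sum; apply: eq_bigr => k _; exact: mcoeffZ. Qed.

Definition bump (s : seq nat) i j :=
  set_nth 0%N (set_nth 0%N s i (nth 0%N s i).+1) j (nth 0%N s j).+1.

Lemma nth_bump s i j k : (i < j)%N ->
  nth 0%N (bump s i j) k =
  if k == j then (nth 0%N s j).+1 else if k == i then (nth 0%N s i).+1 else nth 0%N s k.
Proof. by move=> ij; rewrite /bump nth_set_nth /= nth_set_nth /=. Qed.

Lemma size_bump s i j : (i < j)%N -> (j < size s)%N -> size (bump s i j) = size s.
Proof. move=> ij js; rewrite /bump !size_set_nth; lia. Qed.

Lemma sumn_bump s i j : (i < j)%N -> (j < size s)%N ->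
  sumn (bump s i j) = (sumn s + 2)%N.
Proof.
move=> ij js; rewrite /bump sumn_set_nth_ltn; last by rewrite size_set_nth; lia.
rewrite sumn_set_nth_ltn; last lia.
rewrite nth_set_nth /= (_ : (j == i) = false); last by apply/eqP; lia.
lia.
Qed.

Lemma mem_bump s i j x : (i < j)%N -> (j < size s)%N -> x \in bump s i j ->
  exists2 y, y \in s & (y <= x <= y.+1)%N.
Proof.
move=> ij js /(nthP 0%N) [k]; rewrite size_bump // => ks <-.
exists (nth 0%N s k); first exact: mem_nth.
rewrite nth_bump //; case: eqP => [->|_]; first lia.
case: eqP => [->|_]; lia.
Qed.

Lemma allm_Lmon (q : pred (seq nat)) s :
  (forall t, size t = size s -> sumn t = (sumn s + 2)%N ->
     (forall x, x \in t -> exists2 y, y \in s & (y <= x <= y.+1)%N) -> q t) ->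
  allm q (Lmon s).
Proof.
move=> h; apply: allm_sum => i _; apply: allm_sum => j ij.
apply: allm_prodT => t pt; apply: h.
- by rewrite (perm_size pt) size_bump.
- by rewrite (perm_sumn pt) sumn_bump.
- by move=> x; rewrite (perm_mem pt); apply: mem_bump.
Qed.

Lemma mcoeff_Lmon s m : (Lmon s)@_m =
  (\sum_(i < size s) \sum_(j < size s | (i < j)%N)
      (mon (set_nth 0%N (set_nth 0%N s i (nth 0%N s i).+1) j (nth 0%N s j).+1) == m))%:R.
Proof.
rewrite /Lmon raddf_sum natr_sum; apply: eq_bigr => i _.
rewrite raddf_sum natr_sum; apply: eq_bigr => j _.
exact: mcoeff_prodT.
Qed.

Lemma allm_Hmon (q : pred (seq nat)) s :
  (forall t, size t = (size s).+1 ->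
     (forall x, x \in t -> exists2 y, y \in s & (x <= y)%N) -> q t) ->
  allm q (Hmon s).
Proof.
move=> h; apply: allmZ; apply: allm_sum => k _; rewrite big_seq; apply: allm_sum => l.
rewrite mem_index_iota => /andP [l1 la].
rewrite -!mulrA mulr_natl; apply: allmMn.
rewrite (_ : T _ * (T _ * prodT _) = prodT [:: 1 + l, 1 + nth 0 s k - l & take k s ++ drop k.+1 s]%N); last first.
  by rewrite /prodT !big_cons.
have ks : (k < size s)%N by [].
apply: allm_prodT => t pt; apply: h.
- by rewrite (perm_size pt) /= size_cat size_take size_drop ks -addSn subnKC.
- move=> x; rewrite (perm_mem pt) !inE => /orP [/eqP->|/orP [/eqP->|]].
  + exists (nth 0%N s k); [exact: mem_nth | lia].
  + exists (nth 0%N s k); [exact: mem_nth | lia].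
  + rewrite mem_cat => /orP [/mem_take|/mem_drop] xs; by exists x.
Qed.

Lemma sum_pick (V : nmodType) (I : eqType) (s : seq I) (F : I -> V) a :
  uniq s -> \sum_(x <- s) F x *+ (x == a) = if a \in s then F a else 0.
Proof.
elim: s => [|x s IH]; first by rewrite big_nil.
rewrite /= big_cons inE => /andP [xs us]; rewrite IH //.
case: (eqVneq x a) => [ea|ne] /=.
  by subst a; rewrite (negbTE xs) mulr1n addr0.
by rewrite mulr0n add0r.
Qed.

Definition Filt (p : pred {cmonom nat}) (P : Defs.poly) : Defs.poly :=
  \sum_(m <- msupp P | p m) << P@_m *g m >>.

Lemma mcoeff_Filt p P m : (Filt p P)@_m = if p m then P@_m else 0.
Proof.
rewrite /Filt raddf_sum /= big_mkcond /=.
rewrite (eq_bigr (fun k => (if p k then P@_k else 0) *+ (k == m))); last first.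
  by move=> k _; case: (p k) => //=; [exact: mcoeffU | rewrite mul0rn].
rewrite sum_pick; last exact: fset_uniq.
case: ifP => // /negbT /mcoeff_outdom ->; by case: (p m).
Qed.

Lemma Filt_split p P : P = Filt p P + Filt (predC p) P.
Proof.
apply/malgP => m; rewrite mcoeffD !mcoeff_Filt /=.
by case: (p m); rewrite ?addr0 ?add0r.
Qed.

Lemma allm_Filt (p : pred {cmonom nat}) (q q' : pred (seq nat)) P : allm q P ->
  (forall m, p m -> q (mseq m) -> q' (mseq m)) -> allm q' (Filt p P).
Proof.
move=> h h' m; rewrite -mcoeff_neq0 mcoeff_Filt.
case pm: (p m); last by rewrite eqxx.
rewrite mcoeff_neq0 => /h; exact: h'.
Qed.

Lemma allm_mem (q : pred (seq nat)) P m : allm q P -> P@_m != 0 -> q (mseq m).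
Proof. by move=> h; rewrite mcoeff_neq0; exact: h. Qed.

Definition XSq (m : nat) (s : seq nat) : bool :=
  [&& size s == 3%N, m.-1 \in s, sumn s == (2 * m)%N &
      all (fun i => (2 <= i <= m.-1)%N) s].
Definition L3q (m : nat) (s : seq nat) : bool :=
  [&& size s == 3%N, sumn s == (2 * m + 2)%N & all (fun i => (2 <= i <= m)%N) s].
Definition Gq (B : nat) (s : seq nat) : bool :=
  (3 <= size s)%N && all (fun i => (i + size s + (size s == 3%N) <= B)%N) s.

Lemma XSq_perm m s t : perm_eq s t -> XSq m s = XSq m t.
Proof. by move=> pt; rewrite /XSq (perm_size pt) (perm_mem pt) (perm_sumn pt) (perm_all _ pt). Qed.

Lemma L_XSq m : allm (XSq m) =1 allm (XSq m). Proof. by []. Qed.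

Lemma Lmon_XSq m s : XSq m s -> allm (L3q m) (Lmon s).
Proof.
case/and4P => /eqP s3 _ /eqP ss /allP sa.
apply: allm_Lmon => t st sut ht; rewrite /L3q st s3 sut ss; apply/and3P; split => //.
apply/allP => x /ht [y ys] /andP [yx xy]; have := sa y ys => /andP [y2 ym].
apply/andP; split; lia.
Qed.

Lemma Lmon_Gq B s : Gq B s -> allm (Gq B.+1) (Lmon s).
Proof.
case/andP => s3 /allP sa.
apply: allm_Lmon => t st sut ht; rewrite /Gq st s3 /=.
apply/allP => x /ht [y ys] /andP [yx xy]; have := sa y ys; lia.
Qed.

Lemma Hmon_XSq m s : (1 <= m)%N -> XSq m s -> allm (Gq (m + 3)) (Hmon s).
Proof.
move=> m1; case/and4P => /eqP s3 _ _ /allP sa.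
apply: allm_Hmon => t st ht; rewrite /Gq st s3 /=.
apply/allP => x /ht [y ys] xy; have := sa y ys => /andP [y2 ym]; lia.
Qed.

Lemma Hmon_Gq B s : Gq B s -> allm (Gq B.+1) (Hmon s).
Proof.
case/andP => s3 /allP sa.
apply: allm_Hmon => t st ht; rewrite /Gq st /=.
have -> : ((size s).+1 == 3%N) = false by apply/eqP; lia.
apply/andP; split; first lia.
apply/allP => x /ht [y ys] xy; have := sa y ys; rewrite addn0; lia.
Qed.
Lemma prodT1 (c : nat) : prodT [:: c] = T c.
Proof. rewrite /prodT big_cons big_nil. exact: mulr1. Qed.
Lemma prodT_cons x s : prodT (x :: s) = T x * prodT s.
Proof. exact: big_cons. Qed.
Lemma prodT3 (a b c : nat) : prodT [:: a; b; c] = T a * (T b * T c).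
Proof. by rewrite prodT_cons prodT_cons prodT1. Qed.

Lemma Apoly_E m : Apoly m =
  - \sum_(1 <= k < m) (prodT [:: (1 + k)%N; (1 + m - k)%N; m] *+ 'C(m, k)).
Proof.
rewrite /Apoly; congr (- _); apply: eq_bigr => k _.
rewrite -!mulrA mulr_natl prodT3. reflexivity.
Qed.
Lemma allm_Apoly m : (1 <= m)%N -> allm (XSq m.+1) (Apoly m).
Proof.
move=> m1; rewrite Apoly_E; apply: allmN; rewrite big_seq.
apply: allm_sum => k; rewrite mem_index_iota => /andP [k1 km].
apply: allmMn; apply: allm_prodT => t pt; rewrite (XSq_perm _ _ _ pt) /XSq /=.
rewrite !inE eqxx !orbT /=.
repeat (apply/andP; split); try (apply/eqP); lia.
Qed.

Lemma mcoeff_Apoly m mu : (Apoly m)@_mu =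
  - \sum_(1 <= k < m) ((mon [:: (1 + k)%N; (1 + m - k)%N; m] == mu)%:R *+ 'C(m, k)).
Proof.
rewrite Apoly_E raddfN raddf_sum /=; congr (- _); apply: eq_bigr => k _.
by rewrite mcoeffMn mcoeff_prodT.
Qed.

Lemma Apoly_coef m mu : (Apoly m)@_mu <= 0 /\ (Apoly m)@_mu \is a Num.int.
Proof.
rewrite mcoeff_Apoly; split.
  by rewrite oppr_le0; apply: sumr_ge0 => k _; rewrite mulrn_wge0.
by rewrite rpredN; apply: rpred_sum => k _; rewrite rpredMn // natr_int.
Qed.

Fixpoint Xp (m : nat) : Defs.poly :=
  match m with
  | 0 | 1 | 2 => 0
  | m'.+1 => Apoly m' + Filt (fun mu => m' \in mseq mu) (Lop (Xp m'))
  end.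

Lemma Rpoly_S m : (2 <= m)%N -> Rpoly m.+1 = Apoly m + Lop (Rpoly m) + Hop (Rpoly m).
Proof. by case: m => [|[|m]]. Qed.

Lemma Xp_S m : (2 <= m)%N ->
  Xp m.+1 = Apoly m + Filt (fun mu => m \in mseq mu) (Lop (Xp m)).
Proof. by case: m => [|[|m]]. Qed.

Lemma Lop_coef X mu : (forall nu, X@_nu <= 0 /\ X@_nu \is a Num.int) ->
  (Lop X)@_mu <= 0 /\ (Lop X)@_mu \is a Num.int.
Proof.
move=> h; rewrite /Lop mcoeff_linext; split.
  apply: sumr_le0 => k _; rewrite mcoeff_Lmon.
  by apply: mulr_le0_ge0; [case: (h k) | apply: ler0n].
apply: rpred_sum => k _; rewrite mcoeff_Lmon.
by apply: rpredM; [case: (h k) | apply: natr_int].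
Qed.

Lemma arith (R : comRingType) (a f fc ly hx hy : R) :
  a + ((f + fc) + ly) + (hx + hy) - (a + f) = fc + ly + hx + hy.
Proof. ring. Qed.

Lemma inv m : (2 <= m)%N ->
  [/\ allm (XSq m) (Xp m),
      (forall mu, (Xp m)@_mu <= 0 /\ (Xp m)@_mu \is a Num.int) &
      allm (Gq (m + 2)) (Rpoly m - Xp m)].
Proof.
elim: m => [//|m IH] hm.
have [m1|m2] := eqVneq m 1%N.
  subst m; split => /=; rewrite ?subrr; try exact: allm0.
  by move=> mu; rewrite mcoeff0 lexx rpred0.
have hm2 : (2 <= m)%N by lia.
have [hX hc hY] := IH hm2.
set p := (fun mu : {cmonom nat} => m \in mseq mu).
have hLX : allm (L3q m) (Lop (Xp m)) by apply: allm_linext hX _; exact: Lmon_XSq.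
split.
- rewrite Xp_S //; apply: allmD; first by apply: allm_Apoly; lia.
  apply: (allm_Filt _ _ _ _ hLX) => mu pm.
  case/and3P => /eqP s3 /eqP ss /allP sa; rewrite /XSq s3 ss /=.
  repeat (apply/andP; split) => //; first (apply/eqP; lia).
  apply/allP => x xs; have := sa x xs; lia.
- move=> mu; rewrite Xp_S // mcoeffD mcoeff_Filt.
  have [a1 a2] := Apoly_coef m mu.
  case: ifP => _; last by rewrite addr0.
  have [l1 l2] := Lop_coef _ mu hc.
  split; [by rewrite -[0]addr0 lerD | exact: rpredD].
- set Y := Rpoly m - Xp m.
  have eR : Rpoly m = Xp m + Y by rewrite /Y addrC subrK.
  have -> : Rpoly m.+1 - Xp m.+1 =
      Filt (predC p) (Lop (Xp m)) + Lop Y + Hop (Xp m) + Hop Y.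
    rewrite Rpoly_S // Xp_S // eR /Lop /Hop !linextD.
    rewrite {1}(Filt_split p (linext Lmon (Xp m))).
    exact: arith.
  apply: allmD; first apply: allmD; first apply: allmD.
  + apply: (allm_Filt _ _ _ _ hLX) => mu /= pm.
    case/and3P => /eqP s3 _ /allP sa; rewrite /Gq s3 /=.
    apply/allP => x xs; have := sa x xs.
    have : x != m by apply/eqP => exm; subst x; move: pm; rewrite /= /p xs.
    lia.
  + apply: allm_linext hY _ => s; rewrite (_ : m.+1 + 2 = (m + 2).+1)%N; last lia.
    exact: Lmon_Gq.
  + apply: allm_linext hX _ => s hs; rewrite (_ : (m.+1 + 2) = m + 3)%N; last lia.
    by apply: Hmon_XSq => //; lia.
  + apply: allm_linext hY _ => s; rewrite (_ : m.+1 + 2 = (m + 2).+1)%N; last lia.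
    exact: Hmon_Gq.
Qed.

Lemma perm_mseq_cons (m : {cmonom nat}) n :
  perm_eq (mseq (mmul m (ucm n))) (n :: mseq m).
Proof.
by apply/allP => i _; rewrite /= !mseq_count cmM cmU addnC.
Qed.

Lemma mon_filter_eq (m nu : {cmonom nat}) n : m n = 1%N ->
  (mon [seq i <- mseq m | i != n] == nu) = (m == mmul nu (ucm n)) && (nu n == 0%N).
Proof.
move=> mn.
have key : forall i, mon [seq i <- mseq m | i != n] i = if i == n then 0%N else m i.
  move=> i; rewrite monE count_filter.
  case: eqVneq => [->|ne].
    by apply/eqP; rewrite -leqn0 leqNgt -has_count; apply/hasP => -[x _ /andP [/eqP -> ]]; rewrite eqxx.
  rewrite -mseq_count; apply: eq_count => x /=.
  by case: eqVneq => // ->; rewrite (negbTE ne).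
apply/idP/idP.
  move/eqP => <-; rewrite key eqxx /= andbT; apply/cmP => i.
  by rewrite cmM key cmU; case: eqVneq => [->|]; rewrite ?mn ?addn0.
case/andP => /eqP em /eqP nun; apply/cmP => i.
rewrite key em cmM cmU; case: eqVneq => [->|_]; by rewrite ?nun ?addn0.
Qed.

Lemma mcoeff_coefT n (P : Defs.poly) nu :
  (coefT n 1 P)@_nu = if nu n == 0%N then P@_(mmul nu (ucm n)) else 0.
Proof.
rewrite /coefT raddf_sum /=.
rewrite (eq_bigr (fun m : {cmonom nat} => P@_m * ((m == mmul nu (ucm n)) && (nu n == 0%N))%:R)); last first.
  move=> m /eqP mn; rewrite mcoeffZ mcoeff_prodT mon_filter_eq //.
case: eqP => nun; last first.
  by rewrite big1 // => m _; rewrite andbF mulr0.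
rewrite big_mkcond /=.
rewrite (eq_bigr (fun m : {cmonom nat} => (if m n == 1%N then P@_m else 0) *+ (m == mmul nu (ucm n)))); last first.
  by move=> m _; rewrite andbT; case: ifP; rewrite ?mul0r ?mul0rn // => _; rewrite mulr_natr.
rewrite sum_pick; last exact: fset_uniq.
rewrite cmM cmUU nun /=.
by case: ifP => // /negbT /mcoeff_outdom ->.
Qed.

Lemma a_coef n nu : (4 <= n)%N ->
  (a_ n)@_nu = if nu n == 0%N then (Xp n.+1)@_(mmul nu (ucm n)) else 0.
Proof.
move=> n4; rewrite /a_ mcoeff_coefT; case: eqP => // nun.
have [hX hc hY] := inv n.+1 (ltnW (ltnW (ltnW n4))).
rewrite -{1}(subrK (Xp n.+1) (Rpoly n.+1)) mcoeffD.
set mu0 := mmul nu (ucm n).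
suff -> : (Rpoly n.+1 - Xp n.+1)@_mu0 = 0 by rewrite add0r.
apply/eqP; apply: contraT => /(allm_mem _ _ _ hY).
have : n \in mseq mu0 by rewrite mem_mseq -cmE_neq0 cmM cmUU addn1.
move=> nin /andP [s3 /allP /(_ n nin)].
move=> h; case: eqP h => e h; lia.
Qed.

Lemma a_shape n nu : (4 <= n)%N -> (a_ n)@_nu != 0 ->
  nu n = 0%N /\ exists i j, mseq nu = [:: i; j] /\ (i + j = n + 2)%N /\
     (3 <= i <= n.-1)%N /\ (3 <= j <= n.-1)%N.
Proof.
move=> n4; rewrite a_coef //; case: ifP => [/eqP nun|_]; last by rewrite eqxx.
move=> nz; split => //.
have [hX hc hY] := inv n.+1 (ltnW (ltnW (ltnW n4))).
have := allm_mem _ _ _ hX nz; rewrite (XSq_perm _ _ _ (perm_mseq_cons nu n)).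
have nn : n \notin mseq nu by rewrite mem_mseq -cmE_eq0 nun.
move: nn; case: (mseq nu) => [|i [|j [|k r]]] //= nn.
case/and4P => _ _ /eqP ss /and4P [_ /andP [i2 iN] /andP [j2 jN] _].
move: nn; rewrite !inE negb_or => /andP [ni nj].
exists i, j; split => //.
have : i != n by rewrite eq_sym.
have : j != n by rewrite eq_sym.
move=> /eqP h1 /eqP h2; move: ss; rewrite /= addn0 => ss; split; first lia.
split; apply/andP; split; lia.
Qed.

Lemma mon_st_n s t n : mon [:: s; t; n] = mmul (mon [:: s; t]) (ucm n).
Proof. by apply/eqP/cmP => i; rewrite cmM !monE cmU /= !addn0 addnA. Qed.

Lemma a_nonzero n s t : (4 <= n)%N -> (s + t = n + 2)%N -> (3 <= s)%N -> (3 <= t)%N ->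
  (a_ n)@_(mon [:: s; t]) != 0.
Proof.
move=> n4 st s3 t3.
have nun : mon [:: s; t] n = 0%N.
  rewrite monE /=; case: eqP => [?|_]; first lia.
  case: eqP => [?|_]; first lia. by [].
rewrite a_coef // nun eqxx -mon_st_n.
have [hX hc hY] := inv n (ltnW (ltnW n4)).
rewrite Xp_S; last lia.
rewrite mcoeffD mcoeff_Filt.
set mu0 := mon [:: s; t; n].
have hA : (Apoly n)@_mu0 < 0.
  rewrite mcoeff_Apoly oppr_lt0.
  have kin : (s.-1 \in index_iota 1 n) by rewrite mem_index_iota; lia.
  rewrite (bigD1_seq s.-1) //=; last exact: iota_uniq.
  apply: (@lt_le_trans _ _ ('C(n, s.-1))%:R).
    by rewrite ltr0n bin_gt0; lia.
  rewrite -[X in X <= _]addr0; apply: lerD; last by apply: sumr_ge0 => k _; rewrite mulrn_wge0.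
  have -> : mon [:: (1 + s.-1)%N; (1 + n - s.-1)%N; n] = mu0.
    by rewrite /mu0; congr mon; congr cons; [lia | congr cons; lia].
  by rewrite eqxx mulr1n.
apply: ltr0_neq0.
case: ifP => _; last by rewrite addr0.
have [l1 _] := Lop_coef _ mu0 hc.
by rewrite -[0]addr0 ltr_leD.
Qed.

Section CV.
Variable (R : realType) (k : nat).

Lemma cvD (x y : 'rV[R]_k) i : coordval (x + y) i = coordval x i + coordval y i.
Proof.
rewrite /coordval; case: ifP => _; last by rewrite addr0.
by case: insub => [j|]; rewrite ?mxE ?addr0.
Qed.

Lemma cv_x (x : 'rV[R]_k) (j : 'I_k) : coordval x (j + 3) = x 0 j.
Proof.
rewrite /coordval (_ : (3 <= j + 3)%N = true); last by apply/idP; lia.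
rewrite addnK; case: insubP => [u _ uv|]; last by rewrite ltn_ord.
by f_equal; apply: val_inj.
Qed.

Lemma cv_e (j0 : 'I_k) i : coordval (delta_mx 0 j0 : 'rV[R]_k) i = (i == j0 + 3)%N%:R.
Proof.
rewrite /coordval; case: ifP => i3; last first.
  by case: eqP => // ei; move: i3; rewrite ei; lia.
case: insubP => [u _ uv|un].
  rewrite mxE eqxx /= -(inj_eq val_inj) uv.
  have e : ((i - 3)%N == j0) = (i == j0 + 3)%N by case: eqP => h1; case: eqP => h2 //; lia.
  by rewrite e.
case: eqP => // ei; move: un; rewrite ei; have := ltn_ord j0; lia.
Qed.
End CV.

Theorem mainTheorem17 (n : nat) : (5 <= n)%N ->
  (* a_n lies in Z[T_3, ..., T_{n-1}] *)
  (forall m : {cmonom nat}, m \in msupp (a_ n) ->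
     (a_ n)@_m \is a Num.int /\
     (forall i : nat, i \in finsupp m -> (3 <= i <= n - 1)%N)) /\
  (* a_n is homogeneous of degree 2 *)
  (forall m : {cmonom nat}, m \in msupp (a_ n) -> mdeg m = 2%N) /\
  (* the quadratic form on R^(n-3) (coordinates T_3..T_{n-1}) is non-degenerate *)
  (forall R : realType, nondegenerate_qf R (n - 3) (a_ n)).
Proof.
move=> n5; have n4 : (4 <= n)%N by lia.
split; [|split].
- move=> m; rewrite -mcoeff_neq0 => nz.
  have [mn [i [j [ms [sij [hi hj]]]]]] := a_shape _ _ n4 nz.
  split.
    rewrite a_coef // mn eqxx.
    have [_ hc _] := inv n.+1 (ltnW (ltnW (ltnW n4))).
    by case: (hc (mmul m (ucm n))).
  move=> k; rewrite -mem_mseq ms !inE => /orP [/eqP->|/eqP->]; lia.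
- move=> m; rewrite -mcoeff_neq0 => nz.
  have [_ [i [j [ms _]]]] := a_shape _ _ n4 nz.
  by rewrite -size_mseq ms.
move=> R x hx; apply/rowP => j; rewrite mxE.
have jlt := ltn_ord j.
set t := (j + 3)%N.
set s := (n + 2 - t)%N.
have s3 : (3 <= s)%N by rewrite /s /t; lia.
have t3 : (3 <= t)%N by rewrite /t; lia.
have st : (s + t = n + 2)%N by rewrite /s /t; lia.
have j0lt : (s - 3 < n - 3)%N by rewrite /s /t; lia.
set j0 := (Ordinal j0lt).
have j0s : (j0 + 3)%N = s by rewrite /= subnK.
set e := (delta_mx 0 j0 : 'rV[R]_(n - 3)).
have := hx e; rewrite /polar.
have E : qform (a_ n) (x + e) - qform (a_ n) x - qform (a_ n) e =
   \sum_(mu <- msupp (a_ n)) ratr ((a_ n)@_mu) *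
     (\prod_(i <- mseq mu) coordval (x + e) i - \prod_(i <- mseq mu) coordval x i
        - \prod_(i <- mseq mu) coordval e i).
  by rewrite /qform /evalP -!sumrB; apply: eq_bigr => mu _; rewrite !mulrBr.
rewrite E; clear E.
set nu0 := mon [:: s; t].
have nz0 : (a_ n)@_nu0 != 0 by apply: a_nonzero.
have nu0in : nu0 \in msupp (a_ n) by rewrite -mcoeff_neq0.
rewrite (bigD1_seq nu0) //=; last exact: fset_uniq.
rewrite [X in (_ + X) / _]big1_seq ?addr0; last first.
  move=> mu /andP [ne muin].
  have nz : (a_ n)@_mu != 0 by rewrite mcoeff_neq0.
  have [_ [i [j' [ms [sij [hi hj]]]]]] := a_shape _ _ n4 nz.
  rewrite ms !big_cons !big_nil !mulr1 !cvD !cv_e j0s.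
  have his : i != s.
    apply/eqP => ei; have ej : j' = t by lia.
    by move: ne; rewrite -(monK mu) ms ei ej eqxx.
  have js : j' != s.
    apply/eqP => ej; have ei : i = t by lia.
    move: ne; rewrite -(monK mu) ms ei ej /nu0.
    have pts : perm_eq [:: t; s] [:: s; t] by apply/permP => p /=; rewrite !addn0 addnC.
    by rewrite (mon_perm _ _ pts) eqxx.
  rewrite (negbTE his) (negbTE js) /=; ring.
have [_ [i [j' [ms [sij [hi hj]]]]]] := a_shape _ _ n4 nz0.
rewrite ms !big_cons !big_nil !mulr1 !cvD !cv_e j0s.
have iin : i \in [:: s; t] by rewrite -(perm_mem (mseq_mon [:: s; t])) -/nu0 ms inE eqxx.
have key : ratr (a_ n)@_nu0 *
   ((coordval x i + (i == s)%:R) * (coordval x j' + (j' == s)%:R) -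
    coordval x i * coordval x j' - (i == s)%:R * (j' == s)%:R) =
   ratr (a_ n)@_nu0 * (coordval x t * (1 + (s == t)%:R)) :> R.
  move: iin; rewrite !inE => /orP [/eqP ei|/eqP ei].
    have ej : j' = t by lia.
    rewrite ei ej eqxx; case: (eqVneq t s) => [ets|nts].
      by rewrite ets /=; ring.
    by rewrite ?(negbTE nts) 1?eq_sym ?(negbTE nts) /=; ring.
  have ej : j' = s by lia.
  rewrite ei ej eqxx; case: (eqVneq t s) => [ets|nts].
    by rewrite ets /=; ring.
  by rewrite ?(negbTE nts) 1?eq_sym ?(negbTE nts) /=; ring.
rewrite key => /eqP; rewrite mulf_eq0 invr_eq0 pnatr_eq0 orbF mulf_eq0 fmorph_eq0.
rewrite (negbTE nz0) /= mulf_eq0 => /orP [/eqP|]; last first.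
  by rewrite paddr_eq0 ?ler01 ?ler0n // oner_eq0.
by rewrite /t cv_x.
Qed.
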